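(* Let $\lambda,\mu\in P^+$ and let $X\subseteq\mathcal{B}(\lambda)$ and $Y\subseteq\mathcal{B}(\mu)$ be extremal subsets. Then $X\otimes Y=\{x\otimes y: x\in X, y\in Y\}$ is an extremal subset of $\mathcal{B}(\lambda)\otimes\mathcal{B}(\mu)$ if and only if the following holds: for every $i\in I$ and every $x\otimes y\in X\otimes Y$ such that $e_i(x\otimes y)=e_i(x)\otimes y\neq 0$ and $f_i(x\otimes y)=x\otimes f_i(y)\neq 0$, we have $f_i(y)\in Y$.
   Context: Let $\mathfrak g$ be a complex semisimple Lie algebra with Dynkin index set $I$, weight lattice $P$, simple coroots $\alpha_i^\vee$, and dominant weights $P^+=\{\lambda\in P:\langle\alpha_i^\vee,\lambda\rangle\ge 0\ \forall i\in I\}$. For $\lambda\in P^+$, $\mathcal{B}(\lambda)$ denotes Kashiwara's crystal of the irreducible highest weight module of highest weight $\lambda$, with maps $\mathrm{wt}$, and $e_i,f_i:\mathcal{B}(\lambda)\to\mathcal{B}(\lambda)\sqcup\{0\}$, where $\varepsilon_i(b)=\max\{k\ge0: e_i^k(b)\ne0\}$ and $\varphi_i(b)=\max\{k\ge 0: f_i^k(b)\neq 0\}$. The tensor product crystal $\mathcal{B}(\lambda)\otimes\mathcal{B}(\mu)$ has elements $b_1\otimes b_2$ and operators: $e_i(b_1\otimes b_2)=e_i(b_1)\otimes b_2$ if $\varepsilon_i(b_2)\le\varphi_i(b_1)$ and $=b_1\otimes e_i(b_2)$ otherwise; $f_i(b_1\otimes b_2)=f_i(b_1)\otimes b_2$ if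 $\varepsilon_i(b_2)<\varphi_i(b_1)$ and $=b_1\otimes f_i(b_2)$ otherwise (with $0\otimes b=b\otimes 0=0$). An $i$-string of a crystal is a connected component of the graph whose edges are $b\to f_i(b)$ ($f_i(b)\ne 0$). A subset $X$ of a crystal $\mathcal{B}$ (here $\mathcal{B}(\lambda)$ or $\mathcal{B}(\lambda)\otimes\mathcal{B}(\mu)$) is extremal if $X$ is nonempty and for every $i\in I$ and every $i$-string $S$ of $\mathcal{B}$, $S\cap X$ is either $\varnothing$, or $S$, or $\{b\}$ where $b\in S$ satisfies $e_i(b)=0$. *)

(* Defs.v *)
From mathcomp Require Import all_boot all_order all_algebra.
Set Implicit Arguments. Unset Strict Implicit. Unset Printing Implicit Defensive.
Import GRing.Theory Num.Theory.

(* Cartan matrix A, with A i j = <alpha_i^vee, alpha_j>. Weights are given in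
   fundamental-weight coordinates: lam : 'I_n -> int with lam i = <alpha_i^vee, lam>.
   The simple root alpha_j thus has coordinates (fun i => A i j). *)
Definition cartan_matrix (n : nat) (A : 'M[int]_n) : Prop :=
  (forall i, A i i = Posz 2) /\
  (forall i j, i != j -> A i j <= 0)%R /\
  (forall i j, (A i j == 0) = (A j i == 0)).

Definition dominant (n : nat) (lam : 'I_n -> int) : Prop :=
  forall i, (0 <= lam i)%R.

(* k-fold iteration of a partial operator; None plays the role of 0. *)
Fixpoint iter_op (T : Type) (g : T -> option T) (k : nat) (b : T) : option T :=
  match k with
  | 0 => Some b
  | k'.+1 => if iter_op g k' b is Some b' then g b' else None
  end.

(* max { k >= 0 : g^k b <> 0 }; on a finite crystal strings have < #|T|+1 elements *)
Definition str_len (T : finType) (g : T -> option T) (b : T) : nat :=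
  \max_(k < #|T|.+1 | iter_op g k b != None) k.

Definition eps_ (T : finType) (n : nat) (e : 'I_n -> T -> option T) i b :=
  str_len (e i) b.
Definition phi_ (T : finType) (n : nat) (f : 'I_n -> T -> option T) i b :=
  str_len (f i) b.

(* A (finite, seminormal) crystal over the Cartan datum A. *)
Record crystal (n : nat) (A : 'M[int]_n) := Crystal {
  cT :> finType;
  wt : cT -> 'I_n -> int;
  ce : 'I_n -> cT -> option cT;
  cf : 'I_n -> cT -> option cT;
  cef : forall i b b', (cf i b = Some b') <-> (ce i b' = Some b);
  cwt_f : forall i b b', cf i b = Some b' -> forall j, wt b' j = (wt b j - A j i)%R;
  cphi_eps : forall i b,
      (Posz (phi_ cf i b) - Posz (eps_ ce i b))%R = wt b i
}.

Definition highest_weight (n : nat) (A : 'M[int]_n) (B : crystal A)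
    (lam : 'I_n -> int) : Prop :=
  exists bl : B, (forall j, wt bl j = lam j) /\ (forall i, ce i bl = None) /\
    forall b : B, connect (fun u v => [exists i, cf i u == Some v]) bl b.

(* Tensor product B1 (x) B2 on T1 * T2 (Kashiwara's convention as in the paper). *)
Section Tensor.
Variables (n : nat) (A : 'M[int]_n) (B1 B2 : crystal A).

Definition te (i : 'I_n) (p : B1 * B2) : option (B1 * B2) :=
  let: (b1, b2) := p in
  if (eps_ (ce (c:=B2)) i b2 <= phi_ (cf (c:=B1)) i b1)%N
  then omap (fun x => (x, b2)) (ce i b1)
  else omap (fun y => (b1, y)) (ce i b2).

Definition tf (i : 'I_n) (p : B1 * B2) : option (B1 * B2) :=
  let: (b1, b2) := p in
  if (eps_ (ce (c:=B2)) i b2 < phi_ (cf (c:=B1)) i b1)%N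
  then omap (fun x => (x, b2)) (cf i b1)
  else omap (fun y => (b1, y)) (cf i b2).
End Tensor.

Definition istring (T : finType) (n : nat) (f : 'I_n -> T -> option T)
    (i : 'I_n) (b : T) : {set T} :=
  [set b' | connect (fun u v => (f i u == Some v) || (f i v == Some u)) b b'].

(* X is extremal: nonempty, and each i-string S meets X in nothing, all of S,
   or exactly one element b of S with e_i b = 0. (Every i-string is istring i b
   for some b.) *)
Definition extremal (T : finType) (n : nat) (e f : 'I_n -> T -> option T)
    (X : {set T}) : Prop :=
  X != set0 /\
  forall i b,
    let S := istring f i b in
    S :&: X = set0 \/ S \subset X \/
    exists b0, [/\ b0 \in S, e i b0 = None & S :&: X = [set b0]].

(* Main.v *)
Require Import Defs.
From mathcomp Require Import all_boot all_order all_algebra.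
From mathcomp Require Import zify.
Import Order.TTheory GRing.Theory Num.Theory.

Section Iter.
Variables (T : finType) (g : T -> option T) (h : T -> int).
Hypothesis Hh : forall b c, g b = Some c -> (h b < h c)%R.

Lemma iter_opS k b :
  iter_op g k.+1 b = if g b is Some c then iter_op g k c else None.
Proof.
elim: k b => [|k IH] b /=; first by case: (g b).
move: (IH b) => /= ->; by case: (g b).
Qed.

Lemma iter_up b k m : k <= m -> iter_op g k b = None -> iter_op g m b = None.
Proof.
elim: m => [|m IH]; first by rewrite leqn0 => /eqP ->.
rewrite leq_eqVlt => /orP[/eqP -> //|Hk Hn] /=.
by rewrite IH.
Qed.

Arguments iter_up [b k m].

Lemma iter_mono j d b c c' : iter_op g j b = Some c ->
  iter_op g (j + d).+1 b = Some c' -> (h c < h c')%R.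
Proof.
move=> Hc; elim: d c' => [|d IH] c'.
  by rewrite addn0 /= Hc; apply: Hh.
rewrite addnS => H.
have {H} : (if iter_op g (j + d).+1 b is Some x then g x else None) = Some c' by [].
case E: (iter_op g (j + d).+1 b) => [c''|] // Hg.
exact: lt_trans (IH _ E) (Hh _ _ Hg).
Qed.

Arguments iter_mono [j d b c c'].

Lemma iter_bound b : iter_op g #|T| b = None.
Proof.
case E: (iter_op g #|T| b) => [c|] //; exfalso.
have Hall : forall k, k <= #|T| -> iter_op g k b != None.
  move=> k Hk; apply/negP => /eqP Hn.
  by rewrite (iter_up Hk Hn) in E.
pose F (j : 'I_#|T|.+1) := odflt b (iter_op g j b).
have Hlt : forall j j' : 'I_#|T|.+1, j < j' -> F j != F j'.
  move=> j j' Hjj'; rewrite /F.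
  have := Hall j; rewrite -ltnS ltn_ord => /(_ isT).
  case Ej: (iter_op g j b) => [cj|] // _.
  have := Hall j'; rewrite -ltnS ltn_ord => /(_ isT).
  case Ej': (iter_op g j' b) => [cj'|] // _ /=.
  have Hj' : (j + (j' - j.+1)).+1 = j' by lia.
  rewrite -Hj' in Ej'.
  have := iter_mono Ej Ej'.
  by apply: contraTneq => ->; rewrite ltxx.
have Finj : injective F.
  move=> j j' Hjj'; apply/val_inj/eqP; case: (ltngtP j j') => // H.
  - by move: (Hlt _ _ H); rewrite Hjj' eqxx.
  - by move: (Hlt _ _ H); rewrite Hjj' eqxx.
by have := leq_card F Finj; rewrite card_ord ltnn.
Qed.

Lemma exists_len b : exists2 m, m < #|T| &
  (iter_op g m b != None) && (iter_op g m.+1 b == None).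
Proof.
have : forall k, iter_op g k b = None -> exists2 m, m < k &
  (iter_op g m b != None) && (iter_op g m.+1 b == None).
  elim=> [|k IH] //= Hk.
  case E: (iter_op g k b) Hk => [c|] Hk.
    by exists k => //; rewrite E Hk.
  by have [m Hm H] := IH E; exists m => //; apply: ltnW.
by move=> /(_ _ (iter_bound b)).
Qed.

Lemma str_len_eq b m : m <= #|T| -> iter_op g m b != None ->
  iter_op g m.+1 b = None -> str_len g b = m.
Proof.
move=> Hm Hne Hn; rewrite /str_len; apply/eqP; rewrite eqn_leq; apply/andP; split.
  apply/bigmax_leqP => k Hk; rewrite leqNgt; apply/negP => Hmk.
  by rewrite (iter_up Hmk Hn) in Hk.
have Hm' : m < #|T|.+1 by [].
exact: (@leq_bigmax_cond _ (fun k : 'I_#|T|.+1 => iter_op g k b != None)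
   (fun k => nat_of_ord k) (Ordinal Hm')).
Qed.

Arguments str_len_eq [b m].

Lemma str_len_S b c : g b = Some c -> str_len g b = (str_len g c).+1.
Proof.
move=> Hb.
have [m Hm /andP[Hne /eqP Hn]] := exists_len c.
rewrite (str_len_eq (ltnW Hm) Hne Hn).
apply: str_len_eq => //; by rewrite iter_opS Hb.
Qed.
End Iter.

Section Cryst.
Variables (n : nat) (A : 'M[int]_n).
Hypothesis HA : cartan_matrix A.

Lemma cf_wt (B : crystal A) i (b c : B) : cf i b = Some c -> wt c i = (wt b i - 2)%R.
Proof. move=> H; rewrite (cwt_f H); case: HA => -> _ //. Qed.

Arguments cf_wt [B i b c].

Lemma phi_S (B : crystal A) i (b c : B) : cf i b = Some c ->
  phi_ (@cf _ _ B) i b = (phi_ (@cf _ _ B) i c).+1.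
Proof.
move=> H; apply: (@str_len_S _ _ (fun b => - wt b i)%R) H.
move=> u v /cf_wt ->; lia.
Qed.

Arguments phi_S [B i b c].

Lemma eps_S (B : crystal A) i (b c : B) : cf i b = Some c ->
  eps_ (@ce _ _ B) i c = (eps_ (@ce _ _ B) i b).+1.
Proof.
move=> H; apply: (@str_len_S _ _ (fun b => wt b i)); last by apply/cef.
move=> u v /cef /cf_wt ->; lia.
Qed.

Arguments eps_S [B i b c].

Lemma tf_te (B1 B2 : crystal A) i u v :
  tf i u = Some v -> @te _ _ B1 B2 i v = Some u.
Proof.
case: u => b1 b2; rewrite /tf /te /=; case: ifP => H.
  case E: (cf i b1) => [b1'|] //= [<-].
  rewrite (phi_S E) ltnS in H; rewrite H.
  by move/cef: E => ->.
case E: (cf i b2) => [b2'|] //= [<-].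
rewrite (eps_S E) ltnNge; move/negbT: H; rewrite -leqNgt => ->.
by move/cef: E => ->.
Qed.
End Cryst.

Local Notation rel f i := (fun u v => (f i u == Some v) || (f i v == Some u)).

Lemma rel_sym (T : finType) n (f : 'I_n -> T -> option T) i : symmetric (rel f i).
Proof. by move=> u v; rewrite orbC. Qed.

Lemma top_reach (T : finType) n (e f : 'I_n -> T -> option T) i
  (Hfe : forall u v, f i u = Some v -> e i v = Some u) t s :
  e i t = None -> connect (rel f i) t s -> exists k, iter_op (e i) k s = Some t.
Proof.
move=> Ht /connectP [p Hp ->].
suff aux : forall p x, path (rel f i) x p -> (exists k, iter_op (e i) k x = Some t) ->
  exists k, iter_op (e i) k (last x p) = Some t.
  by apply: aux Hp _; exists 0.
elim=> [|y q IH] x //=.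
move=> /andP[Hxy Hq] [k Hk]; apply: IH Hq _.
case/orP: Hxy => /eqP H.
  by exists k.+1; rewrite iter_opS (Hfe _ _ H).
case: k Hk => [|k] Hk.
  by case: Hk => Hk; rewrite -Hk (Hfe _ _ H) in Ht.
by exists k; rewrite iter_opS (Hfe _ _ H) in Hk.
Qed.

Lemma top_eq (T : finType) (g : T -> option T) k t1 t2 :
  g t2 = None -> iter_op g k t2 = Some t1 -> t2 = t1.
Proof. by case: k => [_ [] //|k]; rewrite iter_opS => ->. Qed.

Lemma local_of_extremal (T : finType) n (e f : 'I_n -> T -> option T)
  (Hef : forall i u v, e i u = Some v -> f i v = Some u) (X : {set T}) :
  extremal e f X -> forall i x x', x \in X -> e i x = Some x' ->
  x' \in X /\ forall x'', f i x = Some x'' -> x'' \in X.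
Proof.
move=> [_ HX] i x x' Hx Hex.
have HxS : x \in istring f i x by rewrite inE connect0.
move: (HX i x); cbv zeta => -[H|[H|[b0 [Hb0 He0 H]]]].
- have : x \in istring f i x :&: X by rewrite inE HxS Hx.
  by rewrite H inE.
- split.
    apply: (subsetP H); rewrite inE; apply: connect1.
    by apply/orP; right; apply/eqP; apply: Hef.
  move=> x'' Hfx; apply: (subsetP H); rewrite inE; apply: connect1.
  by apply/orP; left; apply/eqP.
- have : x \in istring f i x :&: X by rewrite inE HxS Hx.
  by rewrite H in_set1 => /eqP Hxb; rewrite Hxb He0 in Hex.
Qed.

Lemma extremal_of_local (T : finType) n (e f : 'I_n -> T -> option T)
  (Hfe : forall i u v, f i u = Some v -> e i v = Some u) (Z : {set T}) :
  Z != set0 ->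
  (forall i z z', z \in Z -> e i z = Some z' ->
     z' \in Z /\ forall z'', f i z = Some z'' -> z'' \in Z) ->
  extremal e f Z.
Proof.
move=> HZ HL; split=> // i b; cbv zeta.
have Hsym := sym_connect_sym (@rel_sym _ _ f i).
case: (boolP [exists w, (w \in istring f i b :&: Z) && (e i w != None)]).
  case/existsP => w /andP[Hw Hew]; right; left.
  apply/subsetP => s Hs.
  rewrite inE in Hw; case/andP: Hw => HwS HwZ.
  rewrite inE in HwS.
  have Hws : connect (rel f i) w s.
    by rewrite inE in Hs; apply: (connect_trans _ Hs); rewrite Hsym.
  move: Hws => /connectP [p Hp ->].
  have Hwf : forall s', f i w = Some s' -> s' \in Z.
    by case E: (e i w) Hew => [w'|] // _; exact: (HL _ _ _ HwZ E).2.
  elim: p w HwZ Hwf Hp {HwS Hew} => [|y p IH] x Hx Hfx //=.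
  case/andP => Hxy Hp.
  case/orP: Hxy => /eqP H.
    have Hy := Hfx _ H.
    have [_ Hyf] := HL _ _ _ Hy (Hfe _ _ _ H).
    exact: IH Hy Hyf Hp.
  have [Hy _] := HL _ _ _ Hx (Hfe _ _ _ H).
  apply: IH Hy _ Hp.
  by move=> s'; rewrite H => -[<-].
move/existsPn => Hno.
have Htop : forall w, w \in istring f i b :&: Z -> e i w = None.
  by move=> w Hw; move: (Hno w); rewrite Hw /=; case: (e i w).
case: (eqVneq (istring f i b :&: Z) set0) => [H|H]; [by left | right; right].
case/set0Pn: H => b0 Hb0.
exists b0; split.
- by move: Hb0; rewrite inE => /andP[].
- exact: Htop.
apply/setP => w; rewrite in_set1; apply/idP/idP; last by move/eqP ->.
move=> Hw; apply/eqP.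
have Hb0S : b0 \in istring f i b by move: Hb0; rewrite inE => /andP[].
have HwS : w \in istring f i b by move: Hw; rewrite inE => /andP[].
rewrite inE in Hb0S; rewrite inE in HwS.
have Hc : connect (rel f i) b0 w by apply: (connect_trans _ HwS); rewrite Hsym.
have [k Hk] := @top_reach _ _ e f i (Hfe i) _ _ (Htop _ Hb0) Hc.
exact: top_eq (Htop _ Hw) Hk.
Qed.

Theorem theorem1p1 (n : nat) (A : 'M[int]_n) (lam mu : 'I_n -> int)
    (B1 B2 : crystal A) (X : {set B1}) (Y : {set B2}) :
  cartan_matrix A -> dominant lam -> dominant mu ->
  highest_weight B1 lam -> highest_weight B2 mu ->
  extremal (@ce _ _ B1) (@cf _ _ B1) X ->
  extremal (@ce _ _ B2) (@cf _ _ B2) Y ->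
  extremal (@te _ _ B1 B2) (@tf _ _ B1 B2) (setX X Y) <->
  (forall (i : 'I_n) (x : B1) (y : B2), x \in X -> y \in Y ->
     te i (x, y) = omap (fun x' => (x', y)) (ce i x) -> te i (x, y) != None ->
     forall y', tf i (x, y) = Some (x, y') -> cf i y = Some y' -> y' \in Y).
Proof.
move=> HA _ _ _ _ EX EY; split.
  move=> [_ HZ] i x y Hx Hy _ Hne y' Htf _.
  case: (boolP (y' \in Y)) => // Hy'.
  have HS : (x, y) \in istring (@tf _ _ B1 B2) i (x, y) by rewrite inE connect0.
  have HS' : (x, y') \in istring (@tf _ _ B1 B2) i (x, y).
    by rewrite inE; apply: connect1; apply/orP; left; apply/eqP.
  move: (HZ i (x, y)); cbv zeta => -[H|[H|[b0 [_ Hb0 H]]]].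
  - have : (x, y) \in istring (@tf _ _ B1 B2) i (x, y) :&: setX X Y.
      by rewrite inE HS in_setX Hx Hy.
    by rewrite H inE.
  - by move: (subsetP H _ HS'); rewrite in_setX (negbTE Hy') andbF.
  - have : (x, y) \in istring (@tf _ _ B1 B2) i (x, y) :&: setX X Y.
      by rewrite inE HS in_setX Hx Hy.
    by rewrite H in_set1 => /eqP Hb; rewrite Hb Hb0 in Hne.
move=> Hcond.
have Hef1 : forall i (u v : B1), ce i u = Some v -> cf i v = Some u.
  by move=> i u v H; apply/cef.
have Hef2 : forall i (u v : B2), ce i u = Some v -> cf i v = Some u.
  by move=> i u v H; apply/cef.
have LX := @local_of_extremal _ _ _ _ Hef1 _ EX.
have LY := @local_of_extremal _ _ _ _ Hef2 _ EY.
apply: extremal_of_local.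
- by move=> i u v; apply: tf_te.
- case: EX => /set0Pn [x Hx] _; case: EY => /set0Pn [y Hy] _.
  by apply/set0Pn; exists (x, y); rewrite in_setX Hx Hy.
move=> i [x y] z'; rewrite in_setX => /andP[Hx Hy] Hte; simpl in Hx, Hy.
have Hne : te i (x, y) != None by rewrite Hte.
move: Hte; rewrite /te /=; case: ifP => Hb.
  case E: (ce i x) => [x'|] //= [<-].
  have [Hx' Hfx] := LX i x x' Hx E.
  split; first by rewrite in_setX Hx' Hy.
  move=> z''; rewrite /tf /=; case: ifP => Hb2.
    case E2: (cf i x) => [x''|] //= [<-].
    by rewrite in_setX (Hfx _ E2) Hy.
  case E2: (cf i y) => [y''|] //= [<-].
  rewrite in_setX Hx /=.
  apply: (Hcond i x y Hx Hy _ Hne y'' _ (E2 : cf i y = Some y'')).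
    by rewrite /te /= Hb.
  by rewrite /tf /= Hb2 E2.
case E: (ce i y) => [y'|] //= [<-].
have [Hy' Hfy] := LY i y y' Hy E.
split; first by rewrite in_setX Hx Hy'.
move=> z''; rewrite /tf /=; case: ifP => Hb2.
  by rewrite (ltnW Hb2) in Hb.
case E2: (cf i y) => [y''|] //= [<-].
by rewrite in_setX Hx (Hfy _ E2).
Qed.
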